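(* Let $Z_\bullet$ be a semi-simplicial space and $Y_\bullet$ a semi-simplicial subspace which is full relative to $Z_\bullet$. If each inclusion $Y_n\hookrightarrow Z_n$ is a closed inclusion, then the induced map of geometric realisations $\|Y_\bullet\|\to\|Z_\bullet\|$ is a closed inclusion. The same holds with ''closed inclusion'' replaced by ''open inclusion''.
   Context: The geometric realisation $\|Z_\bullet\|$ is $\bigsqcup_{n\geq0}\Delta^n\times Z_n$ modulo the face relations, and $\|Z_\bullet\|^{(n)}$ denotes its $n$-skeleton (image of simplices of dimension $\leq n$). A semi-simplicial subspace $Y_\bullet\subseteq Z_\bullet$ (subspaces $Y_n\subseteq Z_n$ closed under the face maps) is full relative to $Z_\bullet$ if for each $n$ the square with maps $\Delta^n\times Y_n\to\Delta^n\times Z_n$, $\Delta^n\times Y_n\to\|Y_\bullet\|^{(n)}$, $\Delta^n\times Z_n\to\|Z_\bullet\|^{(n)}$, $\|Y_\bullet\|^{(n)}\to\|Z_\bullet\|^{(n)}$ is Cartesian in the category of sets; equivalently, a simplex $\sigma\in Z_n$ lies in $Y_n$ whenever at least one of its vertices lies in $Y_0$. *)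

(* Defs.v *)
From HB Require Import structures.
From mathcomp Require Import all_boot all_order all_algebra.
From mathcomp Require Import all_classical all_reals all_analysis.
From Stdlib Require Import Relations.
Set Implicit Arguments. Unset Strict Implicit. Unset Printing Implicit Defensive.
Import Order.TTheory GRing.Theory Num.Theory.
Local Open Scope classical_set_scope.
Local Open Scope ring_scope.

(* Face indices are natural numbers; indices i > n+1 are junk
   and never used. *)
Record ssspace := SSSpace {
  ss_ob :> nat -> topologicalType;
  ss_face : forall n : nat, nat -> ss_ob n.+1 -> ss_ob n;
  ss_face_cont : forall n i, (i <= n.+1)%N -> continuous (@ss_face n i);
  ss_face_comp : forall n i j (z : ss_ob n.+2), (i < j)%N -> (j <= n.+2)%N ->
      @ss_face n i (@ss_face n.+1 j z) = @ss_face n j.-1 (@ss_face n.+1 i z)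
}.

Definition ss_map (Y Z : ssspace) (f : forall n, Y n -> Z n) : Prop :=
  forall n i (y : Y n.+1), (i <= n.+1)%N ->
    f n (@ss_face Y n i y) = @ss_face Z n i (f n.+1 y).

Section Realisation.
Variable R : realType.

Definition in_simplex n (t : 'rV[R]_n.+1) : Prop :=
  (forall k, 0 <= t 0 k) /\ \sum_k t 0 k = 1.

(* coface delta^i : Delta^n -> Delta^{n+1}, inserting a 0 at coordinate i. *)
Definition coface n (i : nat) (t : 'rV[R]_n.+1) : 'rV[R]_n.+2 :=
  \row_(k < n.+2) (if (k < i)%N then t 0 (inord k)
                   else if (k == i :> nat) then 0 else t 0 (inord k.-1)).

(* Points of  \coprod_n  R^{n+1} x Z_n  (only simplex points are used). *)
Definition Pt (Z : ssspace) := {n : nat & ('rV[R]_n.+1 * Z n)%type}.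

Definition inDelta (Z : ssspace) (p : Pt Z) : Prop := in_simplex (projT2 p).1.

Definition face_step (Z : ssspace) (p q : Pt Z) : Prop :=
  exists n i (t : 'rV[R]_n.+1) (z : Z n.+1),
    [/\ (i <= n.+1)%N, in_simplex t,
        p = existT _ n.+1 (coface i t, z) &
        q = existT _ n (t, @ss_face Z n i z)].

Definition eqclass (Z : ssspace) (p : Pt Z) : set (Pt Z) :=
  [set q | clos_refl_sym_trans _ (@face_step Z) p q].

(* Geometric realisation ||Z||, as the set of equivalence classes of
   points of  \coprod_n Delta^n x Z_n. *)
Definition real (Z : ssspace) :=
  {A : set (Pt Z) | exists p, inDelta p /\ A = eqclass p}.

Definition at_pt (Z : ssspace) (a : real Z) (p : Pt Z) : Prop :=
  proj1_sig a = eqclass p.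

(* Quotient topology of the disjoint union of the Delta^n x Z_n
   (Delta^n with the subspace topology of R^{n+1}): U is open iff for each
   n its preimage in Delta^n x Z_n is relatively open. *)
Definition real_open (Z : ssspace) (U : set (real Z)) : Prop :=
  forall n, exists V : set ('rV[R^o]_n.+1 * Z n)%type, open V /\
    forall (t : 'rV[R]_n.+1) (z : Z n), in_simplex t ->
      ((exists2 a, U a & at_pt a (existT _ n (t, z))) <-> V (t, z)).

Definition skel (Z : ssspace) (n : nat) : set (real Z) :=
  [set a | exists p : Pt Z, [/\ (projT1 p <= n)%N, inDelta p & at_pt a p]].

Definition pt_map (Y Z : ssspace) (f : forall n, Y n -> Z n) (p : Pt Y) : Pt Z :=
  existT _ (projT1 p) ((projT2 p).1, f _ (projT2 p).2).

Definition real_map (Y Z : ssspace) (f : forall n, Y n -> Z n)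
  (a : real Y) : real Z :=
  let p := proj1_sig (cid (proj2_sig a)) in
  exist _ (eqclass (pt_map f p))
    (ex_intro _ (pt_map f p) (conj (proj1 (proj2_sig (cid (proj2_sig a)))) erefl)).

(* Y full relative to Z (via f): for each n the square
     Delta^n x Y_n  -->  Delta^n x Z_n
         |                    |
     ||Y||^(n)      -->  ||Z||^(n)
   is Cartesian in sets, i.e. the comparison map from Delta^n x Y_n to the
   pullback is injective (i) and surjective (ii). *)
Definition full (Y Z : ssspace) (f : forall n, Y n -> Z n) : Prop :=
  forall n : nat,
  (forall (t t' : 'rV[R]_n.+1) (y y' : Y n), in_simplex t -> in_simplex t' ->
     (t, f n y) = (t', f n y') ->
     eqclass (existT _ n (t, y)) = eqclass (existT _ n (t', y')) ->
     (t, y) = (t', y')) /\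
  (forall (t : 'rV[R]_n.+1) (z : Z n) (a : real Y), in_simplex t ->
     skel n a -> at_pt (real_map f a) (existT _ n (t, z)) ->
     exists y : Y n, f n y = z /\ at_pt a (existT _ n (t, y))).

End Realisation.

(* Closed / open inclusions, for spaces given by their predicate of open
   sets: f is a homeomorphism onto its image, and the image is closed
   (resp. open). *)
Definition embedding_by (X Y : Type) (openX : set X -> Prop)
  (openY : set Y -> Prop) (f : X -> Y) : Prop :=
  [/\ injective f,
      (forall V, openY V -> openX (f @^-1` V)) &
      (forall U, openX U -> exists2 V, openY V & U = f @^-1` V)].

Definition closed_incl_by (X Y : Type) (openX : set X -> Prop)
  (openY : set Y -> Prop) (f : X -> Y) : Prop :=
  embedding_by openX openY f /\ openY (~` range f).

Definition open_incl_by (X Y : Type) (openX : set X -> Prop)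
  (openY : set Y -> Prop) (f : X -> Y) : Prop :=
  embedding_by openX openY f /\ openY (range f).

Definition closed_incl (X Y : topologicalType) (f : X -> Y) :=
  closed_incl_by (@open X) (@open Y) f.
Definition open_incl (X Y : topologicalType) (f : X -> Y) :=
  open_incl_by (@open X) (@open Y) f.

(* Main.v *)
Require Import Defs.
From HB Require Import structures.
From mathcomp Require Import all_boot all_order all_algebra.
From mathcomp Require Import all_classical all_reals all_analysis.
From Stdlib Require Import Relations.
Set Implicit Arguments. Unset Strict Implicit. Unset Printing Implicit Defensive.
Import Order.TTheory GRing.Theory Num.Theory.
Local Open Scope classical_set_scope.
Local Open Scope ring_scope.
Lemma box_of_open (X Y : topologicalType) (U : set (X * Y)) x y :
  open U -> U (x, y) ->
  exists A B, [/\ open A, open B, A x, B y & forall a b, A a -> B b -> U (a, b)].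
Proof.
rewrite openE => oU /oU [[P Q] [/= Px Qy] sPQ].
move: Px Qy; rewrite !nbhsE => -[A [oA Ax] sA] [B [oB By] sB].
exists A, B; split => // a b Aa Bb; apply: (sPQ (a, b)); split; [exact: sA|exact: sB].
Qed.

Lemma open_of_boxes (X Y : topologicalType) (S : set (X * Y)) :
  (forall p, S p -> exists A B, [/\ open A, open B, A p.1, B p.2 &
      forall a b, A a -> B b -> S (a, b)]) -> open S.
Proof.
move=> H; rewrite openE => p /H [A [B [oA oB Ap Bp sAB]]].
exists (A, B); first by split; [apply: open_nbhs_nbhs|apply: open_nbhs_nbhs].
by case=> a b [/= Aa Bb]; exact: sAB.
Qed.
Lemma coface_simplex (R : realType) n i (t : 'rV[R]_n.+1) :
  (i <= n.+1)%N -> in_simplex t -> in_simplex (coface i t).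
Proof.
move=> hi [h0 h1]; split.
  move=> k; rewrite mxE; case: ifP => _ //; case: ifP => _ //.
rewrite (bigD1_ord (inord i : 'I_n.+2)) //= mxE inordK // ltnn eqxx add0r.
rewrite -h1; apply: eq_bigr => k _; rewrite mxE /= inordK // /bump.
have [hk|hk] := leqP i k.
  rewrite (_ : (true + k = k.+1)%N) // ifF; last by rewrite ltnNge ltnW.
  rewrite ifF; last by apply/negbTE; rewrite neq_ltn ltnS hk orbT.
  by congr (t 0 _); apply: val_inj; rewrite /= inordK // ltnS.
rewrite (_ : (false + k = k)%N) // hk; congr (t 0 _); apply: val_inj; by rewrite /= inordK //; apply: (ltn_trans hk).
Qed.

Section Main.
Variable R : realType.

Definition eqv (Z : ssspace) := clos_refl_sym_trans _ (@face_step R Z).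

Lemma eqclassP (Z : ssspace) (p q : Pt R Z) :
  eqclass p = eqclass q <-> eqv p q.
Proof.
split.
  move=> e; have : @eqclass R Z q q by apply: rst_refl.
  by rewrite -e.
move=> e; apply/funext => x; apply/propext; rewrite /eqclass /=; split => h.
  by apply: rst_trans h; apply: rst_sym.
by apply: rst_trans h.
Qed.

Definition mkr (Z : ssspace) (p : Pt R Z) (h : inDelta p) : real R Z :=
  exist _ (eqclass p) (ex_intro _ p (conj h erefl)).

Lemma real_eq (Z : ssspace) (a b : real R Z) : proj1_sig a = proj1_sig b -> a = b.
Proof.
case: a b => A hA [B hB] /= e; subst B; congr exist; exact: Prop_irrelevance.
Qed.

Lemma real_rep (Z : ssspace) (a : real R Z) : exists p, inDelta p /\ at_pt a p.
Proof. by case: a => A [p [hp e]]; exists p. Qed.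

Lemma at_mkr (Z : ssspace) (a : real R Z) p (h : inDelta p) : at_pt a p -> a = mkr h.
Proof. by move=> e; apply: real_eq. Qed.

Lemma ex_at (Z : ssspace) (U : set (real R Z)) n t (z : Z n) (ht : in_simplex t) :
  (exists2 a, U a & at_pt a (existT _ n (t, z))) =
  U (@mkr Z (existT _ n (t, z)) ht).
Proof.
apply/propext; split; first by move=> [a Ua /(@at_mkr Z a (existT _ n (t, z)) ht) <-].
by move=> h; exists (@mkr Z (existT _ n (t, z)) ht).
Qed.

Unset Implicit Arguments.
Variables (Y Z : ssspace) (f : forall n, Y n -> Z n).
Set Implicit Arguments.
Hypothesis hf : ss_map f.
Hypothesis hfull : full R f.

Lemma pt_map_eqv (p q : Pt R Y) : eqv p q -> eqv (pt_map f p) (pt_map f q).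
Proof.
elim => {p q} [p q [n [i [t [z [hi ht -> ->]]]]]| p | p q _ IH | p q r _ IH1 _ IH2].
- apply: rst_step; by exists n, i, t, (f n.+1 z); split => //; rewrite /pt_map /= hf.
- exact: rst_refl.
- exact: rst_sym.
- exact: rst_trans IH2.
Qed.

Lemma real_map_at (a : real R Y) p : at_pt a p -> at_pt (real_map f a) (pt_map f p).
Proof.
rewrite /at_pt /real_map /=.
move: (proj2_sig (cid (proj2_sig a))) => [_].
set p0 := proj1_sig _ => e0 e; apply/eqclassP; apply: pt_map_eqv.
by apply/eqclassP; rewrite -e0 -e.
Qed.

Lemma real_map_mkr n t (y : Y n) (ht : in_simplex t) :
  real_map f (@mkr Y (existT _ n (t, y)) ht) = @mkr Z (existT _ n (t, f n y)) ht.
Proof. by apply: real_eq; exact: (@real_map_at (mkr _) (existT _ n (t, y))). Qed.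

Definition inIm (p : Pt R Z) := exists y : Y (projT1 p), (projT2 p).2 = f _ y.

Lemma step_inIm p q : face_step p q -> (inIm p <-> inIm q).
Proof.
move=> [n [i [t [z [hi ht -> ->]]]]]; rewrite /inIm /=; split.
  by move=> [y ->]; exists (ss_face i y); rewrite hf.
move=> [y' e].
have := (hfull n.+1).2 (coface i t) z (@mkr Y (existT _ n (t, y')) ht)
  (coface_simplex hi ht).
case.
- by exists (existT _ n (t, y')); split => //=.
- rewrite /at_pt real_map_mkr /=; apply/eqclassP; apply: rst_sym; apply: rst_step.
  by exists n, i, t, z; split => //; rewrite e.
by move=> y [fy _]; exists y; rewrite fy.
Qed.

Lemma eqv_inIm p q : eqv p q -> (inIm p <-> inIm q).
Proof.
elim => {p q} [p q /step_inIm //| p | p q _ IH | p q r _ IH1 _ IH2].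
- by split.
- by split => /IH.
- by split => [/IH1 /IH2|/IH2 /IH1].
Qed.

Lemma range_real n t (z : Z n) (ht : in_simplex t) :
  range (real_map f) (@mkr Z (existT _ n (t, z)) ht) <-> range (f n) z.
Proof.
split.
  move=> [a _ ea]; have [p [hp ap]] := real_rep a.
  have := real_map_at ap; rewrite ea /at_pt /= => /eqclassP /eqv_inIm e.
  have : inIm (pt_map f p) by case: p {ap hp e} => m [s y]; exists y.
  by move/e => [y /= ->]; exists y.
move=> [y _ <-]; exists (@mkr Y (existT _ n (t, y)) ht) => //.
exact: real_map_mkr.
Qed.

Hypothesis finj : forall n, injective (f n).

Lemma real_map_inj_aux (a a' : real R Y) p p' :
  at_pt a p -> at_pt a' p' -> inDelta p' -> (projT1 p <= projT1 p')%N ->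
  inDelta p -> real_map f a = real_map f a' -> a = a'.
Proof.
case: p' => m [t' y'] ap ap' ht' hle hp E.
have := (hfull m).2 t' (f m y') a ht'.
case.
- by exists p; split.
- by rewrite E; exact: (real_map_at ap').
move=> y [fy ay]; rewrite (finj fy) in ay.
by apply: real_eq; rewrite ay ap'.
Qed.

Lemma real_map_inj : injective (@real_map R Y Z f).
Proof.
move=> a a' E; have [p [hp ap]] := real_rep a; have [p' [hp' ap']] := real_rep a'.
have [h|h] := leqP (projT1 p) (projT1 p').
  exact: real_map_inj_aux ap ap' hp' h hp E.
by apply/esym; apply: real_map_inj_aux ap' ap hp (ltnW h) hp' (esym E).
Qed.

End Main.

Lemma prod_emb (X A B : topologicalType) (g : A -> B) (U : set (X * A)) :
  embedding_by open open g -> open U ->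
  exists2 W : set (X * B), open W & forall x y, W (x, g y) <-> U (x, y).
Proof.
case=> _ _ hemb oU.
exists [set p | exists P Q, [/\ open P, open Q, P p.1, Q p.2 &
   forall a b, P a -> Q (g b) -> U (a, b)]].
  apply: open_of_boxes => p [P [Q [oP oQ Pp Qp sPQ]]].
  by exists P, Q; split => // a b Pa Qb; exists P, Q; split.
move=> x y; split; first by move=> [P [Q [_ _ Px Qy s]]]; exact: s.
move=> Uxy; have [P [Q' [oP oQ' Px Qy sPQ]]] := box_of_open oU Uxy.
have [Q oQ eQ] := hemb _ oQ'.
exists P, Q; split => //=; first by rewrite eQ in Qy.
by move=> a b Pa Qb; apply: sPQ => //; rewrite eQ.
Qed.

Lemma open_snd_pre (X A : topologicalType) (B : set A) :
  open B -> open [set p : X * A | B p.2].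
Proof.
move=> oB; apply: open_of_boxes => p Bp; exists setT, B; split => //.
exact: openT.
Qed.

Theorem lemma6p5 (R : realType) (Y Z : ssspace) (f : forall n, Y n -> Z n) :
  ss_map f ->
  (forall n, embedding_by (@open (Y n)) (@open (Z n)) (f n)) ->
  full R f ->
  ((forall n, closed_incl (f n)) ->
     closed_incl_by (@real_open R Y) (@real_open R Z) (real_map f)) /\
  ((forall n, open_incl (f n)) ->
     open_incl_by (@real_open R Y) (@real_open R Z) (real_map f)).
Proof.
move=> hf hemb hfull.
have finj n : injective (f n) by case: (hemb n).
have rinj := real_map_inj hf hfull finj.
have rr := range_real hf hfull.
have rmk := real_map_mkr (R:=R) hf.
have cont : forall V, @real_open R Z V -> @real_open R Y (real_map f @^-1` V).
  move=> V hV n; have [W [oW hW]] := hV n.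
  exists [set p | W (p.1, f n p.2)]; split.
    apply: open_of_boxes => -[t y] /= Wp.
    have [A [B [oA oB At By sAB]]] := box_of_open oW Wp.
    exists A, (f n @^-1` B); split => //; first by case: (hemb n) => _ hc _; exact: hc.
    by move=> a b Aa Bb; exact: sAB.
  move=> t y ht; rewrite (ex_at _ _ ht) /= rmk.
  by have := hW t (f n y) ht; rewrite (ex_at _ _ ht).
split => hcl.
- split; last first.
    move=> n; exists [set p | ~ range (f n) p.2]; split.
      by apply: (@open_snd_pre _ _ (~` range (f n))); case: (hcl n).
    move=> t z ht; rewrite (ex_at _ _ ht) /=.
    by split => h1 h2; apply: h1; [apply/(rr _ _ _ ht)|apply/(rr _ _ _ ht)].
  split => //.
  move=> U hU.
  exists [set b | forall a, b = real_map f a -> U a]; last first.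
    apply/funext => a; apply/propext; split => /=.
      by move=> Ua a' /rinj <-.
    by move=> h; exact: h.
  move=> n; have [Un [oUn hUn]] := hU n.
  have [W' oW' hW'] := prod_emb (hemb n) oUn.
  exists (W' `|` [set p | ~ range (f n) p.2]); split.
    by apply: openU => //; apply: (@open_snd_pre _ _ (~` range (f n))); case: (hcl n).
  move=> t z ht; rewrite (ex_at _ _ ht) /=.
  case: (pselect (range (f n) z)) => [[y _ <-]|nr].
    rewrite -rmk.
    have := hUn t y ht; rewrite (ex_at _ _ ht) => hU'.
    split.
      by move=> h; left; apply/hW'; apply/hU'; exact: h.
    case=> [/hW' /hU' Ua a' /rinj <- //|h]; exfalso; apply: h; by exists y.
  split => _; first by right.
  by move=> a e; exfalso; apply: nr; apply/(rr _ _ _ ht); exists a.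
- split; last first.
    move=> n; exists [set p | range (f n) p.2]; split.
      by apply: (@open_snd_pre _ _ (range (f n))); case: (hcl n).
    move=> t z ht; rewrite (ex_at _ _ ht) /=.
    exact: rr.
  split => //.
  move=> U hU.
  exists [set b | exists2 a, U a & b = real_map f a]; last first.
    apply/funext => a; apply/propext; split => /=.
      by move=> Ua; exists a.
    by move=> [a' Ua' /rinj ->].
  move=> n; have [Un [oUn hUn]] := hU n.
  have [W' oW' hW'] := prod_emb (hemb n) oUn.
  exists (W' `&` [set p | range (f n) p.2]); split.
    by apply: openI => //; apply: (@open_snd_pre _ _ (range (f n))); case: (hcl n).
  move=> t z ht; rewrite (ex_at _ _ ht) /=.
  case: (pselect (range (f n) z)) => [[y _ <-]|nr].
    rewrite -rmk.
    have := hUn t y ht; rewrite (ex_at _ _ ht) => hU'.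
    split.
      move=> [a Ua /rinj ea]; rewrite -ea in Ua.
      by split; [apply/hW'; apply/hU'|exists y].
    by move=> [/hW' /hU' Ua _]; exists (@mkr R Y (existT _ n (t, y)) ht).
  split; last by case.
  by move=> [a _ e]; exfalso; apply: nr; apply/(rr _ _ _ ht); exists a.
Qed.
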